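(* Let $d\ge 3$ and let $G$ be a group with a faithful self-similar action on $\mathcal{T}_{d-1}$. Then for every $1\le i\le d$, $G$ admits a faithful action on $\mathcal{T}_d$ whose image in $\mathrm{Aut}(\mathcal{T}_d)$ is self-similar and $i$-persistent, and which is finite-state if the action on $\mathcal{T}_{d-1}$ is finite-state, and coarsely diagonal if the action on $\mathcal{T}_{d-1}$ is coarsely diagonal.
   Context: For $m\ge2$, $\mathcal{T}_m$ is the rooted $m$-ary tree with vertex set the finite words over $\{1,\dots,m\}$. Every $f\in\mathrm{Aut}(\mathcal{T}_m)$ has a wreath recursion $f=\rho(f)(f_1,\dots,f_m)$ with $\rho(f)\in S_m$ and $f_j\in\mathrm{Aut}(\mathcal{T}_m)$ determined by $f(jw)=\rho(f)(j)f_j(w)$; the $f_j$ are the level-1 states, and the states of $f$ form the smallest set containing $f$ and closed under taking level-1 states. A subset of $\mathrm{Aut}(\mathcal{T}_m)$ is self-similar if it contains all states of its elements; finite-state if each element has finitely many states. A subgroup $H$ is coarsely diagonal if $(h')^{-1}h$ has finite order for all $h\in H$ and states $h'$ of $h$; $h$ is $i$-persistent if $h_i=h$ in its wreath recursion, and $H$ is $i$-persistent if all its elements are. A group action on a tree is said to have one of these properties if it is faithful and its image in the automorphism group has the property. *)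

(* Defs.v *)
From mathcomp Require Import all_boot.
Set Implicit Arguments. Unset Strict Implicit. Unset Printing Implicit Defensive.

(** Vertices of the rooted m-ary tree T_m: finite words over the alphabet
    'I_m (letters 0..m-1 stand for 1..m). *)
Definition word (m : nat) := seq 'I_m.

Definition is_aut (m : nat) (f : word m -> word m) : Prop :=
  [/\ bijective f,
      forall w, size (f w) = size w &
      forall u v, take (size u) (f (u ++ v)) = f u].

(** For v = [:: j] this is the level-1 state f_j of the wreath
    recursion f = rho(f)(f_1,...,f_m), since f(j w) = rho(f)(j) f_j(w).
    The states of f are exactly the maps section f v, v a vertex. *)
Definition section (m : nat) (f : word m -> word m) (v : word m) : word m -> word m :=
  fun w => drop (size v) (f (v ++ w)).

(** Subsets of Aut(T_m), given as predicates (considered up to extensional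
    equality of maps). *)
Definition self_similar (m : nat) (S : (word m -> word m) -> Prop) : Prop :=
  forall f, S f -> forall v : word m, exists f', S f' /\ section f v =1 f'.

Definition finite_state (m : nat) (S : (word m -> word m) -> Prop) : Prop :=
  forall f, S f -> exists (n : nat) (L : nat -> word m -> word m),
    forall v : word m, exists k, k < n /\ section f v =1 L k.

Definition persistent (m : nat) (i : 'I_m) (S : (word m -> word m) -> Prop) : Prop :=
  forall f, S f -> section f [:: i] =1 f.

(** Coarsely diagonal: (h')^{-1} h has finite order for every h in S and
    every state h' of h.  (h')^{-1} is the inverse map of the automorphism h'
    (any left inverse of the bijection h' is its inverse). *)
Definition coarsely_diagonal (m : nat) (S : (word m -> word m) -> Prop) : Prop :=
  forall h, S h -> forall v : word m, exists n, 0 < n /\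
    forall g : word m -> word m, cancel (section h v) g ->
      forall w, iter n (fun x => g (h x)) w = w.

Definition is_group (G : Type) (mul : G -> G -> G) (inv : G -> G) (one : G) : Prop :=
  [/\ forall x y z, mul x (mul y z) = mul (mul x y) z,
      forall x, mul one x = x /\ mul x one = x &
      forall x, mul (inv x) x = one /\ mul x (inv x) = one].

Definition faithful_action (G : Type) (mul : G -> G -> G) (m : nat)
    (act : G -> word m -> word m) : Prop :=
  [/\ forall g, is_aut (act g),
      forall g h, act (mul g h) =1 act g \o act h &
      forall g h, act g =1 act h -> g = h].

Definition image_of (G : Type) (m : nat) (act : G -> word m -> word m) :
    (word m -> word m) -> Prop :=
  fun f => exists g, f =1 act g.

(* Main.v *)
Require Import Defs.
From mathcomp Require Import all_boot.

Section Emb.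
Set Implicit Arguments. Unset Strict Implicit.
Variables (n : nat) (i : 'I_n.+1).

Definition strip (w : seq 'I_n.+1) : seq 'I_n := pmap (unlift i) w.
Arguments strip : simpl never.

Fixpoint fill (w : seq 'I_n.+1) (s : seq 'I_n) : seq 'I_n.+1 :=
  match w with
  | [::] => [::]
  | a :: w' =>
    match unlift i a with
    | None => a :: fill w' s
    | Some _ => match s with
                | [::] => a :: fill w' [::]
                | b :: s' => lift i b :: fill w' s'
                end
    end
  end.

Definition Phi (f : word n -> word n) : word n.+1 -> word n.+1 :=
  fun w => fill w (f (strip w)).

Lemma size_fill w s : size (fill w s) = size w.
Proof.
elim: w s => [|a w IH] s //=; case: (unlift i a) => [x|] /=; last by rewrite IH.
by case: s => [|b s] /=; rewrite IH.
Qed.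

Lemma strip_cat w1 w2 : strip (w1 ++ w2) = strip w1 ++ strip w2.
Proof. by rewrite /strip pmap_cat. Qed.

Lemma strip_cons a w : strip (a :: w) =
  (if unlift i a is Some x then x :: strip w else strip w).
Proof. by rewrite /strip /=; case: (unlift i a). Qed.

Lemma fill_cat w1 w2 s s2 : size s = size (strip w1) ->
  fill (w1 ++ w2) (s ++ s2) = fill w1 s ++ fill w2 s2.
Proof.
elim: w1 s => [|a w1 IH] s /=.
  by case: s.
rewrite strip_cons; case: (unlift i a) => [x|] /= Hs; last by rewrite IH.
by case: s Hs => [|b s] //= [Hs]; rewrite IH.
Qed.

Lemma strip_fill w s : size s = size (strip w) -> strip (fill w s) = s.
Proof.
elim: w s => [|a w IH] s /=.
  by case: s.
rewrite strip_cons; case E: (unlift i a) => [x|] /= Hs.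
  case: s Hs => [|b s] //= [Hs]; by rewrite strip_cons liftK IH.
by rewrite strip_cons E IH.
Qed.

Lemma fill_strip w : fill w (strip w) = w.
Proof.
elim: w => [|a w IH] //=; rewrite strip_cons.
by case: (unliftP i a) => [x ->|->] /=; rewrite IH.
Qed.

Lemma fill_fill w s t : size s = size (strip w) -> size t = size (strip w) ->
  fill (fill w s) t = fill w t.
Proof.
elim: w s t => [|a w IH] s t //=.
rewrite strip_cons; case E: (unlift i a) => [x|] /= Hs Ht.
  case: s Hs => [|b s] //= [Hs]; rewrite liftK /=.
  by case: t Ht => [|c t] //= [Ht]; rewrite IH.
by rewrite E IH.
Qed.

Lemma strip_map u : strip (map (lift i) u) = u.
Proof. by elim: u => [|a u IH] //=; rewrite strip_cons liftK IH. Qed.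

Lemma fill_map u s : size s = size u -> fill (map (lift i) u) s = map (lift i) s.
Proof.
elim: u s => [|a u IH] [|b s] //= [Hs]; by rewrite liftK IH.
Qed.

Lemma Phi_ext f g : f =1 g -> Phi f =1 Phi g.
Proof. by move=> H w; rewrite /Phi H. Qed.

Lemma Phi_id w : Phi id w = w.
Proof. exact: fill_strip. Qed.

Lemma Phi_comp a b : (forall x, size (a x) = size x) -> (forall x, size (b x) = size x) ->
  forall w, Phi a (Phi b w) = Phi (fun x => a (b x)) w.
Proof.
move=> Ha Hb w; by rewrite /Phi strip_fill ?Hb // fill_fill ?Ha ?Hb.
Qed.

Lemma section_cat (f : word n -> word n) : is_aut f ->
  forall u1 u2, f (u1 ++ u2) = f u1 ++ @section n f u1 u2.
Proof.
case=> _ Hs Hp u1 u2; rewrite /section -{1}(cat_take_drop (size u1) (f (u1 ++ u2))).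
by rewrite Hp.
Qed.

Lemma Phi_cat f : is_aut f -> forall w1 w2,
  Phi f (w1 ++ w2) = Phi f w1 ++ Phi (@section n f (strip w1)) w2.
Proof.
move=> Hf w1 w2; rewrite /Phi strip_cat section_cat // fill_cat //.
by case: Hf => _ -> _.
Qed.

Lemma section_Phi f : is_aut f -> forall v,
  @section n.+1 (Phi f) v =1 Phi (@section n f (strip v)).
Proof.
move=> Hf v w; rewrite /section Phi_cat // drop_size_cat //.
by rewrite /Phi size_fill.
Qed.

Lemma section_ext m (f g : word m -> word m) v : f =1 g -> section f v =1 section g v.
Proof. by move=> H w; rewrite /section H. Qed.

Lemma Phi_aut f : is_aut f -> is_aut (Phi f).
Proof.
move=> Hf; have [[g fK gK] Hs _] := Hf.
have Hg x : size (g x) = size x by rewrite -{2}(gK x) Hs.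
split.
- exists (Phi g) => w.
    by rewrite Phi_comp // (@Phi_ext _ id) // Phi_id.
  by rewrite Phi_comp // (@Phi_ext _ id) // Phi_id.
- by move=> w; rewrite /Phi size_fill.
- move=> u v; rewrite Phi_cat // take_size_cat //.
  by rewrite /Phi size_fill.
Qed.

Lemma Phi_inj f g : (forall x, size (f x) = size x) -> (forall x, size (g x) = size x) ->
  Phi f =1 Phi g -> f =1 g.
Proof.
move=> Hf Hg H u; have := H (map (lift i) u).
rewrite /Phi strip_map !fill_map ?Hf ?Hg //.
by move/(inj_map (@lift_inj _ i)).
Qed.

End Emb.

Theorem lemma5p3 (d : nat) (hd : 3 <= d)
  (G : Type) (mul : G -> G -> G) (inv : G -> G) (one : G)
  (hG : is_group mul inv one)
  (act : G -> word d.-1 -> word d.-1)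
  (hact : faithful_action mul act)
  (hss : self_similar (image_of act)) :
  forall i : 'I_d, exists act' : G -> word d -> word d,
    [/\ faithful_action mul act',
        self_similar (image_of act'),
        persistent i (image_of act'),
        (finite_state (image_of act) -> finite_state (image_of act')) &
        (coarsely_diagonal (image_of act) -> coarsely_diagonal (image_of act'))].
Proof.
case: d hd act hact hss => [|n] // _ act hact hss i /=.
have [Haut Hmul Hfaith] := hact.
have Hsz g x : size (act g x) = size x by case: (Haut g).
exists (fun g => Phi i (act g)); split.
- split.
  + by move=> g; apply: Phi_aut.
  + move=> g h w /=; rewrite Phi_comp //.
    by apply: Phi_ext => x; rewrite Hmul.
  + move=> g h H; apply: Hfaith; exact: Phi_inj H.
- move=> f [g Hf] v.
  have [f' [[g1 Hg1] Hs]] := hss (act g) (ex_intro _ g (fun _ => erefl)) (strip i v).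
  exists (Phi i (act g1)); split; first by exists g1.
  move=> w; rewrite (section_ext _ Hf) section_Phi //.
  by apply: Phi_ext => x; rewrite Hs Hg1.
- move=> f [g Hf] w.
  rewrite (section_ext _ Hf) section_Phi // Hf.
  by apply: Phi_ext => x; rewrite /strip /= unlift_none /section drop0.
- move=> Hfs f [g Hf].
  have [N [L HL]] := Hfs (act g) (ex_intro _ g (fun _ => erefl)).
  exists N, (fun k => Phi i (L k)) => v.
  have [k [Hk HLk]] := HL (strip i v).
  exists k; split => // w.
  by rewrite (section_ext _ Hf) section_Phi //; apply: Phi_ext.
- move=> Hcd h [g0 Hh] v.
  pose s := section (act g0) (strip i v).
  have [N [HN HcdN]] := Hcd (act g0) (ex_intro _ g0 (fun _ => erefl)) (strip i v).
  have [f' [[g1 Hg1] Hs]] := hss (act g0) (ex_intro _ g0 (fun _ => erefl)) (strip i v).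
  have [[k fK kK] _ _] := Haut g1.
  have Hsk : cancel s k by move=> x; rewrite /s Hs Hg1 fK.
  have Hks : cancel k s by move=> x; rewrite /s Hs Hg1 kK.
  have Hszk x : size (k x) = size x by rewrite -{2}(kK x) Hsz.
  have Hszs x : size (s x) = size x by rewrite /s Hs Hg1 Hsz.
  have HF := HcdN k Hsk.
  exists N; split => // g Hg.
  have Hsec : forall x, section h v x = Phi i s x.
    by move=> x; rewrite (section_ext _ Hh) section_Phi.
  have Hgk x : g x = Phi i k x.
    rewrite -{1}(Phi_id i x) -(@Phi_ext _ i (fun y => s (k y))) // -Phi_comp //.
    by rewrite -Hsec Hg.
  pose F := fun x => k (act g0 x).
  have HszF m x : size (iter m F x) = size x.
    by elim: m x => [|m IH] x //=; rewrite /F Hszk Hsz IH.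
  have Hit m w : iter m (fun x => g (h x)) w = Phi i (iter m F) w.
    elim: m w => [|m IH] w /=; first by rewrite Phi_id.
    rewrite IH Hgk Hh !Phi_comp //.
    all: try by move=> x; rewrite ?Hsz ?HszF ?Hszk.
  move=> w; rewrite Hit /Phi.
  rewrite (_ : iter N F (strip i w) = strip i w) ?fill_strip //.
Qed.
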